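(* Let $G$ be a nice connected graph of order $n$, maximum degree $\Delta$ and chromatic number $k$, and let $W$ be a closed walk of $G$ of length $p$ going through all vertices of $G$. Then ${\rm ML}^{\rm W}(G) \leq p + (n-1)(2k-2)+2\Delta$.
   Context: All graphs are finite and simple. A walk of a graph $G$ is a sequence of vertices $u_0u_1\dots u_p$ with $u_tu_{t+1}\in E(G)$ for all $t$ (vertices and edges may repeat); its length is $p$; it is closed if $u_0=u_p$. For a walk $W$ of $G$, $G+W$ is the multigraph on $V(G)$ whose edge multiset consists of $E(G)$ together with each edge added as many times as $W$ traverses it. A multigraph is locally irregular if no two adjacent vertices have the same degree; a walk is irregularising if $G+W$ is locally irregular. A graph is nice if it is connected and not isomorphic to $K_2$. ${\rm ML}^{\rm W}(G)$ denotes the minimum length of an irregularising walk of $G$ (a walk of length $0$ is allowed). *)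

(* Defs.v *)
From mathcomp Require Import all_boot.
Set Implicit Arguments. Unset Strict Implicit. Unset Printing Implicit Defensive.

Section Graphs.
Variable T : finType.

Definition simple_graph (e : rel T) : Prop := symmetric e /\ irreflexive e.

Definition connected_graph (e : rel T) : Prop := forall x y : T, connect e x y.

Definition isK2 (e : rel T) : Prop :=
  #|T| = 2 /\ forall x y : T, x != y -> e x y.

Definition nice (e : rel T) : Prop := connected_graph e /\ ~ isK2 e.

Definition deg (e : rel T) (v : T) : nat := #|[set u | e v u]|.

Definition max_degree (e : rel T) : nat := \max_(v : T) deg e v.

Definition colourable (e : rel T) (k : nat) : Prop :=
  exists f : T -> 'I_k, forall x y, e x y -> f x != f y.

Definition is_chromatic_number (e : rel T) (k : nat) : Prop :=
  colourable e k /\ forall j, colourable e j -> k <= j.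

(* A walk u_0 u_1 ... u_p is represented by its start x0 = u_0 and the list
   s = [u_1; ...; u_p]; its length is size s. *)
Definition is_walk (e : rel T) (x0 : T) (s : seq T) : bool := path e x0 s.
Definition walk_closed (x0 : T) (s : seq T) : bool := last x0 s == x0.
Definition walk_spanning (x0 : T) (s : seq T) : Prop := forall v, v \in x0 :: s.

Definition walk_steps (x0 : T) (s : seq T) : seq (T * T) := zip (x0 :: s) s.

(* Degree of v in the multigraph G + W: deg_G v plus, for each traversal of
   an edge, one for each endpoint equal to v (no loops since e is irreflexive). *)
Definition deg_plus (e : rel T) (x0 : T) (s : seq T) (v : T) : nat :=
  deg e v + count (fun p : T * T => p.1 == v) (walk_steps x0 s)
          + count (fun p : T * T => p.2 == v) (walk_steps x0 s).

(* G + W has the same adjacency as G (only copies of edges of G are added). *)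
Definition irregularising (e : rel T) (x0 : T) (s : seq T) : Prop :=
  is_walk e x0 s /\ forall u v, e u v -> deg_plus e x0 s u != deg_plus e x0 s v.

End Graphs.

(* Main.v *)
Require Import Defs.
From mathcomp Require Import all_boot all_order all_algebra zify ring.
Set Implicit Arguments. Unset Strict Implicit. Unset Printing Implicit Defensive.
Import GRing.Theory Num.Theory.

Ltac genb := repeat match goal with
 | |- context [nat_of_bool ?b] => generalize (nat_of_bool b) => ?
 | |- context [count ?p ?s] => generalize (count p s) => ?
 | |- context [deg ?e ?v] => generalize (deg e v) => ? end.

Section Walks.
Variable T : finType.
Variable e : rel T.

Lemma dp_eq y0 w v :
  deg_plus e y0 w v + (last y0 w == v) = deg e v + 2 * count_mem v w + (y0 == v).
Proof.
rewrite /deg_plus /walk_steps.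
elim: w y0 => [|x w IH] y0; first by rewrite /=; genb; lia.
have E1 : count (fun p : T * T => p.1 == v) (zip (y0 :: x :: w) (x :: w)) = (y0 == v) + count (fun p : T * T => p.1 == v) (zip (x :: w) w) by [].
have E2 : count (fun p : T * T => p.2 == v) (zip (y0 :: x :: w) (x :: w)) = (x == v) + count (fun p : T * T => p.2 == v) (zip (x :: w) w) by [].
have E3 : count_mem v (x :: w) = (x == v) + count_mem v w by rewrite /= eq_sym.
have E4 : last y0 (x :: w) = last x w by [].
have := IH x; rewrite E1 E2 E3 E4; genb; lia.
Qed.

Lemma dp_closed y0 w v : last y0 w = y0 ->
  deg_plus e y0 w v = deg e v + 2 * count_mem v w.
Proof. move=> Hl; have := dp_eq y0 w v; rewrite Hl; genb; lia. Qed.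

Lemma mem_count (x : T) s : (x \in s) = (0 < count_mem x s).
Proof. by rewrite -has_pred1 has_count. Qed.

Hypothesis esym : symmetric e.

Lemma insert_detour x0 s y z :
  path e x0 s -> last x0 s = x0 -> y \in x0 :: s -> e y z ->
  exists s', [/\ path e x0 s', last x0 s' = x0, size s' = (size s).+2 &
     forall v, count_mem v s' = count_mem v s + (y == v) + (z == v)].
Proof.
move=> Hp Hl Hy Hyz; case/splitPl: Hy Hp Hl => s1 s2 Hl1 Hp Hl.
exists (s1 ++ z :: y :: s2); split.
- move: Hp; rewrite !cat_path Hl1 /= => /andP[-> ->]; rewrite Hyz /= esym Hyz.
  done.
- by move: Hl; rewrite !last_cat Hl1 /=.
- by rewrite !size_cat /= addnS addnS.
- move=> v; rewrite !count_cat /= (eq_sym y) (eq_sym z); genb; lia.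
Qed.

Lemma insert_detours x0 s (L : seq (T * T)) :
  path e x0 s -> last x0 s = x0 -> (forall v, v \in x0 :: s) ->
  (forall p, p \in L -> e p.1 p.2) ->
  exists s', [/\ path e x0 s', last x0 s' = x0, (forall v, v \in x0 :: s'),
     size s' = size s + 2 * size L &
     forall v, count_mem v s' = count_mem v s + count (fun p => p.1 == v) L
                                + count (fun p => p.2 == v) L].
Proof.
elim: L s => [|p L IH] s Hp Hl Hsp HL.
  by exists s; split => //; rewrite ?addn0 // => v /=; rewrite !addn0.
have [s1 [Hp1 Hl1 Hsp1 Hsz1 Hc1]] := IH s Hp Hl Hsp (fun q Hq => HL q (@mem_behead _ (p :: L) q Hq)).
have Hpe := HL p (mem_head _ _).
have [s2 [Hp2 Hl2 Hsz2 Hc2]] := insert_detour Hp1 Hl1 (Hsp1 p.1) Hpe.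
exists s2; split => //.
- move=> v; rewrite inE; case: eqP => //= Hv.
  have := Hsp1 v; rewrite inE; case: eqP => //= _.
  rewrite !mem_count Hc2; genb; lia.
- by rewrite Hsz2 Hsz1 /=; lia.
- move=> v; rewrite Hc2 Hc1 /=; genb; lia.
Qed.

Lemma rotate_walk x0 s y :
  path e x0 s -> last x0 s = x0 -> y \in x0 :: s ->
  exists s', [/\ path e y s', last y s' = y, size s' = size s &
     forall v, count_mem v s' = count_mem v s].
Proof.
move=> Hp Hl Hy; case/splitPl: Hy Hp Hl => s1 s2 Hl1 Hp Hl.
have Hl2 : last y s2 = x0 by rewrite -Hl1 -last_cat.
exists (s2 ++ s1); split.
- move: Hp; rewrite !cat_path Hl1 Hl2 => /andP[-> ->] //.
- by rewrite last_cat Hl2 Hl1.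
- by rewrite !size_cat addnC.
- by move=> v; rewrite !count_cat addnC.
Qed.

End Walks.

Section BFS.
Variable T : finType.
Variable e : rel T.
Hypothesis esym : symmetric e.
Hypothesis conn : forall x y, connect e x y.
Variable r : T.

Definition reachn (v : T) (n : nat) : bool :=
  [exists t : n.-tuple T, path e r t && (last r t == v)].

Lemma reachnP v n : reflect (exists p, [/\ size p = n, path e r p & last r p = v]) (reachn v n).
Proof.
apply: (iffP existsP) => [[t /andP[Hp /eqP Hl]]|[p [Hs Hp Hl]]].
  by exists t; rewrite size_tuple.
have Hs' : size p == n by rewrite Hs.
by exists (Tuple Hs'); rewrite /= Hp Hl eqxx.
Qed.

Lemma ex_reach v : exists n, reachn v n.
Proof.
have /connectP [p Hp Hl] := conn r v.
by exists (size p); apply/reachnP; exists p.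
Qed.

Definition dep v := ex_minn (ex_reach v).

Lemma dep_reach v : reachn v (dep v).
Proof. by rewrite /dep; case: ex_minnP. Qed.

Lemma dep_min v n : reachn v n -> dep v <= n.
Proof. by rewrite /dep; case: ex_minnP => m _ H /H. Qed.

Lemma dep_r : dep r = 0.
Proof. apply/eqP; rewrite -leqn0; apply: dep_min; apply/reachnP; by exists [::]. Qed.

Lemma dep_edge u v : e u v -> dep v <= (dep u).+1.
Proof.
move=> Huv; apply: dep_min; have /reachnP [p [Hs Hp Hl]] := dep_reach u.
apply/reachnP; exists (rcons p v); rewrite size_rcons Hs rcons_path Hp Hl last_rcons.
by split.
Qed.

Lemma par_ex u : u != r -> exists w, e u w && ((dep w).+1 == dep u).
Proof.
move=> Hu; have /reachnP [p [Hs Hp Hl]] := dep_reach u.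
case/lastP: p Hs Hp Hl => [|p y] Hs Hp Hl; first by move: Hu; rewrite -Hl /= eqxx.
rewrite last_rcons in Hl; subst y.
move: Hp; rewrite rcons_path => /andP[Hp He].
exists (last r p); rewrite esym He /=.
have H1 : dep (last r p) <= size p by apply: dep_min; apply/reachnP; exists p.
have H2 := dep_edge He.
rewrite size_rcons in Hs; apply/eqP; lia.
Qed.

Definition par u := odflt u [pick w | e u w && ((dep w).+1 == dep u)].

Lemma parP u : u != r -> e u (par u) /\ dep u = (dep (par u)).+1.
Proof.
move=> Hu; rewrite /par; case: pickP => [w /andP[H1 /eqP H2]|H] /=; first by [].
by have [w] := par_ex Hu; rewrite H.
Qed.

End BFS.

Section Greedy.
Variable T : finType.
Variable e : rel T.
Hypothesis esym : symmetric e.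
Hypothesis eirr : irreflexive e.

Lemma deg_le_max v : deg e v <= max_degree e.
Proof. by rewrite /max_degree; apply: (leq_bigmax v). Qed.

Lemma greedy_col : colourable e (max_degree e).+1.
Proof.
set D := max_degree e.
suff: forall s : seq T, exists f : T -> 'I_D.+1,
    forall x y, x \in s -> y \in s -> e x y -> f x != f y.
  move=> /(_ (enum T)) [f Hf]; exists f => x y; apply: Hf; by rewrite mem_enum.
elim=> [|z s [f Hf]]; first by exists (fun _ => ord0).
set used := [set f y | y in [set y | e z y]].
have Hc : #|used| < #|'I_D.+1|.
  rewrite card_ord ltnS; apply: leq_trans (leq_imset_card _ _) _.
  exact: deg_le_max.
have [col Hcol] : exists col : 'I_D.+1, col \notin used.
  apply/existsP; rewrite -negb_forall; apply/negP => /forallP Hall.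
  have : 'I_D.+1 \subset used by apply/subsetP => i _; exact: Hall.
  by move/subset_leq_card; rewrite leqNgt Hc.
exists (fun y => if y == z then col else f y) => x y Hx Hy Hxy.
case: (eqVneq x z) => Hxz; case: (eqVneq y z) => Hyz.
- by move: Hxy; subst; rewrite eirr.
- subst x; apply/eqP => Heq; move: Hcol; rewrite Heq; apply/negP/negPn.
  by apply/imsetP; exists y => //; rewrite inE.
- subst y; apply/eqP => Heq; move: Hcol; rewrite -Heq; apply/negP/negPn.
  by apply/imsetP; exists x => //; rewrite inE esym.
- apply: Hf => //.
  + by move: Hx; rewrite inE (negbTE Hxz).
  + by move: Hy; rewrite inE (negbTE Hyz).
Qed.

End Greedy.

Section Inv.
Variable T : finType.
Variables (r : T) (dep : T -> nat) (par : T -> T).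
Hypothesis Hpar : forall u, u != r -> dep u = (dep (par u)).+1.
Hypothesis Hr : dep r = 0.

Definition Sch (a : T -> nat) v := \sum_(u | (u != r) && (par u == v)) a u.
Definition sg v : int := ((-1) ^+ dep v)%R.

Lemma PoszS (I : finType) (P : pred I) (F : I -> nat) :
  Posz (\sum_(u | P u) F u) = (\sum_(u | P u) Posz (F u))%R.
Proof. exact: (big_morph Posz PoszD (erefl _)). Qed.

Lemma sum_ind (f : T -> int) x : (\sum_v f v * Posz (x == v))%R = f x.
Proof.
rewrite (bigD1 x) //= eqxx mulr1 big1 ?addr0 // => v Hv.
by rewrite eq_sym (negbTE Hv) mulr0.
Qed.

Lemma inv_zero (a : T -> nat) :
  (\sum_v sg v * Posz ((v != r) * a v + Sch a v))%R = 0%R.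
Proof.
under eq_bigr => v _ do rewrite PoszD mulrDr.
rewrite big_split /=.
have -> : (\sum_v sg v * Posz (Sch a v))%R = (\sum_v sg (par v) * Posz ((v != r) * a v))%R.
  rewrite /Sch.
  under eq_bigr => v _ do rewrite PoszS mulr_sumr big_mkcond /=.
  rewrite exchange_big /=; apply: eq_bigr => u _.
  case: (eqVneq u r) => Hu /=.
    by rewrite mul0n mulr0; apply: big1 => v _.
  rewrite mul1n.
  rewrite (bigD1 (par u)) //= eqxx.
  rewrite [X in (_ + X)%R]big1; first exact: addr0.
  by move=> v Hv; rewrite eq_sym (negbTE Hv).
rewrite -big_split /=; apply: big1 => v _.
case: (eqVneq v r) => Hv; first by rewrite !mul0n !mulr0 addr0.
by rewrite /sg (Hpar Hv) exprS mulN1r mulNr addNr.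
Qed.

Variable k : nat.
Variable c : T -> nat.
Hypothesis ck : forall v, c v < k.

Lemma modeq_dvd (x y : nat) : (x %% k = y %% k)%N <-> (Posz k %| (Posz x - Posz y)%R)%Z.
Proof.
rewrite -eqz_mod_dvd !modz_nat; split => [->|/eqP]; first by [].
by case.
Qed.

Lemma root_ok (q0 a : T -> nat) :
  (Posz k %| (\sum_v sg v * (Posz (q0 v) - Posz (c v)))%R)%Z ->
  (forall v, v != r -> (q0 v + a v + Sch a v) %% k = c v) ->
  (q0 r + Sch a r) %% k = c r.
Proof.
move=> Hgood Htree.
pose q v := q0 v + (v != r) * a v + Sch a v.
have Hsum : (\sum_v sg v * (Posz (q v) - Posz (c v)) =
             \sum_v sg v * (Posz (q0 v) - Posz (c v)))%R.
  have H0 := inv_zero a.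
  transitivity (\sum_v (sg v * (Posz (q0 v) - Posz (c v)) + sg v * Posz ((v != r) * a v + Sch a v)))%R.
    apply: eq_bigr => v _; rewrite /q -addnA PoszD; ring.
  by rewrite big_split /= H0 addr0.
have Hq : forall v, v != r -> (Posz k %| (Posz (q v) - Posz (c v))%R)%Z.
  move=> v Hv; apply/modeq_dvd; rewrite /q Hv mul1n Htree // modn_small //.
move: Hgood; rewrite -Hsum (bigD1 r) //= => Hd.
have Hrest : (Posz k %| (\sum_(v | v != r) sg v * (Posz (q v) - Posz (c v)))%R)%Z.
  by apply: rpred_sum => v Hv; rewrite dvdz_mull // Hq.
have : (Posz k %| (sg r * (Posz (q r) - Posz (c r)))%R)%Z.
  by rewrite -(rpredDr _ Hrest).
rewrite /sg Hr expr0 mul1r => /modeq_dvd.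
rewrite (modn_small (ck r)) /q eqxx mul0n addn0 => //.
Qed.

End Inv.

Section Tree.
Variable T : finType.
Variables (r : T) (dep : T -> nat) (par : T -> T).
Hypothesis Hpar : forall u, u != r -> dep u = (dep (par u)).+1.
Variable k : nat.
Hypothesis kpos : 0 < k.
Variable c : T -> nat.
Hypothesis ck : forall v, c v < k.
Variable q0 : T -> nat.

Local Notation Sch := (Sch r par).

Lemma fixmod X cv : cv < k -> (X + (cv + k - X %% k) %% k) %% k = cv.
Proof.
move=> Hc; rewrite modnDmr.
have Hm : X %% k < k by rewrite ltn_mod.
have -> : X + (cv + k - X %% k) = (X %/ k).+1 * k + cv.
  have := divn_eq X k; lia.
by rewrite modnMDl modn_small.
Qed.

Lemma tree_proc : exists a : T -> nat, (forall v, a v < k) /\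
  forall v, v != r -> (q0 v + a v + Sch a v) %% k = c v.
Proof.
set N := (\max_(v : T) dep v).+1.
have HN : forall v, dep v < N by move=> v; rewrite ltnS; apply: (leq_bigmax v).
suff H : forall j, j <= N -> exists a : T -> nat, (forall v, a v < k) /\
  forall v, v != r -> N - j <= dep v -> (q0 v + a v + Sch a v) %% k = c v.
  have [a [Ha1 Ha2]] := H N (leqnn N); exists a; split => // v Hv.
  by apply: Ha2 => //; rewrite subnn.
elim=> [|j IH] Hj.
  exists (fun _ => 0); split => // v _; rewrite subn0 => Hv.
  by have := HN v; rewrite ltnNge Hv.
have [a [Ha1 Ha2]] := IH (ltnW Hj).
set m := N - j.+1.
pose a' v := if dep v == m then (c v + k - (q0 v + Sch a v) %% k) %% k else a v.
have HS : forall v, dep v >= m -> Sch a' v = Sch a v.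
  move=> v Hv; apply: eq_bigr => u /andP[Hu /eqP Hpu].
  rewrite /a'; have := Hpar Hu; rewrite Hpu => ->.
  by case: eqP => // Hm; lia.
exists a'; split.
  by move=> v; rewrite /a'; case: ifP => _; [rewrite ltn_mod | apply: Ha1].
move=> v Hv Hdv.
rewrite HS //.
rewrite /a'; case: eqP => Hdm.
  by rewrite addnAC fixmod.
apply: Ha2 => //; lia.
Qed.

End Tree.


Section Core.
Variable T : finType.
Variable e : rel T.
Hypothesis esym : symmetric e.
Variable k : nat.
Variable c : T -> 'I_k.
Hypothesis Hc : forall x y, e x y -> c x != c y.
Variables (x0 : T) (s : seq T).
Hypothesis Hw : path e x0 s.
Hypothesis Hcl : last x0 s = x0.
Hypothesis Hsp : forall v, v \in x0 :: s.
Variables (r : T) (dep : T -> nat) (par : T -> T).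
Hypothesis Hpar : forall u, u != r -> e u (par u) /\ dep u = (dep (par u)).+1.
Hypothesis Hr : dep r = 0.

Definition Ltree (a : T -> nat) :=
  flatten [seq nseq (a u) (u, par u) | u <- [seq u <- index_enum T | u != r]].

Lemma count_Ltree a (P : pred (T * T)) :
  count P (Ltree a) = \sum_(u | u != r) P (u, par u) * a u.
Proof.
rewrite /Ltree count_flatten sumnE -map_comp big_map big_filter.
by apply: eq_bigr => u _; rewrite /= count_nseq.
Qed.

Lemma size_Ltree a : size (Ltree a) = \sum_(u | u != r) a u.
Proof.
rewrite /Ltree size_flatten /shape sumnE -map_comp big_map big_filter.
by apply: eq_bigr => u _; rewrite /= size_nseq.
Qed.

Lemma core (P : T -> nat) (l we : nat) (a' b' : T) :
  (0 < we -> e a' b') ->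
  (forall s1, path e x0 s1 -> last x0 s1 = x0 -> (forall v, v \in x0 :: s1) ->
     exists y0 w, [/\ path e y0 w, size w = size s1 + l &
       forall v, deg_plus e y0 w v = deg e v + 2 * count_mem v s1 + P v]) ->
  (Posz k %| (\sum_v sg dep v * (Posz ((deg e v + 2 * count_mem v s + P v) %/ 2
        + we * ((a' == v) + (b' == v))) - Posz (c v)))%R)%Z ->
  exists y0 w, irregularising e y0 w /\
    size w <= size s + (#|T| - 1) * (2 * k - 2) + 2 * we + l.
Proof.
move=> Hwe Hfin Hgood.
have kpos : 0 < k by case: k c => // cc; have := cc x0; case.
pose q0 v := (deg e v + 2 * count_mem v s + P v) %/ 2 + we * ((a' == v) + (b' == v)).
have Hpar2 : forall u, u != r -> dep u = (dep (par u)).+1 by move=> u /Hpar[].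
have [a [Hak Htree]] := tree_proc Hpar2 kpos (fun v => ltn_ord (c v)) q0.
pose L := Ltree a ++ nseq we (a', b').
have HL : forall p, p \in L -> e p.1 p.2.
  move=> p; rewrite mem_cat => /orP[|].
    rewrite /Ltree => /flattenP [x /mapP [u]]; rewrite mem_filter => /andP[Hu _] -> .
    by move/nseqP => [-> _] /=; case: (Hpar Hu).
  by move/nseqP => [-> Hwe0] /=; apply: Hwe.
have [s1 [Hp1 Hl1 Hsp1 Hsz1 Hc1]] := insert_detours esym Hw Hcl Hsp HL.
have [y0 [w [Hpw Hszw Hdw]]] := Hfin s1 Hp1 Hl1 Hsp1.
have Hc1' : forall v, count_mem v s1 = count_mem v s + ((v != r) * a v + Sch r par a v)
     + we * ((a' == v) + (b' == v)).
  move=> v; rewrite Hc1 !count_cat !count_Ltree !count_nseq /=.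
  have -> : \sum_(u | u != r) (u == v) * a u = (v != r) * a v.
    case: (eqVneq v r) => Hv.
      subst v; rewrite mul0n; apply: big1 => u Hu.
      by rewrite (negbTE Hu).
    rewrite (bigD1 v) //= eqxx mul1n [X in _ + X]big1 ?addn0 //.
    move=> u /andP[_ Hu]; by rewrite (negbTE Hu).
  have -> : \sum_(u | u != r) (par u == v) * a u = Sch r par a v.
    rewrite /Sch big_mkcondr /=; apply: eq_bigr => u _.
    by case: (par u == v); rewrite ?mul1n ?mul0n.
  genb; lia.
have Hq : forall v, deg_plus e y0 w v %/ 2 = q0 v + ((v != r) * a v + Sch r par a v).
  move=> v; rewrite Hdw Hc1' /q0; genb; lia.
have Hmod : forall v, (deg_plus e y0 w v %/ 2) %% k = c v.
  move=> v; rewrite Hq; case: (eqVneq v r) => Hv.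
    subst v; rewrite mul0n add0n.
    exact: (root_ok Hpar2 Hr (fun v => ltn_ord (c v)) Hgood Htree).
  by rewrite mul1n addnA Htree.
exists y0, w; split.
  split => // u v Huv; apply/negP => /eqP Heq.
  have := Hc Huv; rewrite -val_eqE /= -Hmod -Hmod Heq; by rewrite eqxx.
rewrite Hszw Hsz1 size_cat size_nseq size_Ltree.
have : \sum_(u | u != r) a u <= (#|T| - 1) * (k - 1).
  have H1 : \sum_(u | u != r) a u <= \sum_(u | u != r) (k - 1).
    by apply: leq_sum => u _; have := Hak u; lia.
  apply: leq_trans H1 _.
  rewrite sum_nat_const.
  have -> : #|[pred u | u != r]| = #|T| - 1 by rewrite cardC1; lia.
  done.
lia.
Qed.

End Core.

Lemma modz_nat_ex (m : int) (h : nat) : 0 < h ->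
  exists (w : nat) (Q : int), w < h /\ m = (Q * Posz h + Posz w)%R.
Proof.
move=> hpos.
have Hh : (Posz h != 0)%R by rewrite eqz_nat -lt0n.
have H0 := modz_ge0 m Hh.
have H1 : ((m %% Posz h)%Z < Posz h)%R by apply: ltz_pmod; rewrite ltz_nat.
exists (absz (m %% Posz h)%Z), (m %/ Posz h)%Z.
have Hw : Posz (absz (m %% Posz h)%Z) = (m %% Posz h)%Z by rewrite gez0_abs.
split; last by rewrite Hw -divz_eq.
by rewrite -ltz_nat Hw.
Qed.

Lemma odd_solve (k : nat) (E s : int) : odd k -> (s = 1 \/ s = -1)%R ->
  exists w : nat, w < k /\ (Posz k %| (E + Posz w * (s + s))%R)%Z.
Proof.
move=> Hk Hs.
set h := k./2.
have Hkh : k = h.*2.+1 by rewrite /h -{1}(odd_double_half k) Hk.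
have kpos : 0 < k by rewrite Hkh.
have [w [Q [Hw HQ]]] := modz_nat_ex (- (s * E) * Posz h.+1)%R kpos.
exists w; split => //.
apply/dvdzP; exists (- E * s * s - (s + s) * Q)%R.
have HwE : Posz w = (- (s * E) * Posz h.+1 - Q * Posz k)%R by rewrite HQ; ring.
rewrite HwE Hkh.
have E1 : Posz (h.*2.+1) = (2 * Posz h + 1)%R by lia.
have E2 : Posz h.+1 = (Posz h + 1)%R by lia.
rewrite E1 E2; case: Hs => ->; ring.
Qed.

Lemma even_solve (k : nat) (E s : int) : ~~ odd k -> 0 < k -> (s = 1 \/ s = -1)%R ->
  (2 %| E)%Z ->
  exists w : nat, w < k./2 /\ (Posz k %| (E + Posz w * (s + s))%R)%Z.
Proof.
move=> Hk kpos Hs H2.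
set h := k./2.
have Hkh : k = h.*2 by rewrite /h -{1}(odd_double_half k) (negbTE Hk).
have hpos : 0 < h by move: kpos; rewrite Hkh; case: (h).
have [E' HE'] := dvdzP H2.
have [w [Q [Hw HQ]]] := modz_nat_ex (- (s * E'))%R hpos.
exists w; split => //.
apply/dvdzP; exists (- (s * Q))%R.
have HwE : Posz w = (- (s * E') - Q * Posz h)%R by rewrite HQ; ring.
rewrite HwE HE' Hkh.
have E1 : Posz (h.*2) = (2 * Posz h)%R by lia.
rewrite E1; case: Hs => ->; ring.
Qed.


Section Misc.
Variable T : finType.
Variable e : rel T.
Hypothesis esym : symmetric e.
Hypothesis eirr : irreflexive e.

Lemma sg_pm (dep : T -> nat) v : sg dep v = 1%R \/ sg dep v = (-1)%R.
Proof. rewrite /sg -signr_odd; case: (odd _); [right|left]; by rewrite ?expr1 ?expr0. Qed.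

Lemma sg_eq (dep : T -> nat) u v : odd (dep u) = odd (dep v) -> sg dep u = sg dep v.
Proof. by rewrite /sg -signr_odd -(signr_odd _ (dep v)) => ->. Qed.

Lemma sum_shift (dep : T -> nat) (c f h : T -> nat) :
  (\sum_v sg dep v * (Posz (f v + h v) - Posz (c v)) =
   \sum_v sg dep v * (Posz (f v) - Posz (c v)) + \sum_v sg dep v * Posz (h v))%R.
Proof. rewrite -big_split /=; apply: eq_bigr => v _; rewrite PoszD; ring. Qed.

Lemma sum_ind_nat (dep : T -> nat) (g : T -> nat) x :
  (\sum_v sg dep v * Posz (g v * (x == v)) = sg dep x * Posz (g x))%R.
Proof.
rewrite (bigD1 x) //= eqxx muln1 big1 ?addr0 // => v Hv.
by rewrite eq_sym (negbTE Hv) muln0 mulr0.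
Qed.

Lemma two_nbrs u v : (forall x y, connect e x y) -> ~ isK2 e -> e u v ->
  exists x b1 b2, [/\ e x b1, e x b2 & b1 != b2].
Proof.
move=> conn nK2 Huv.
case: (boolP [exists x, exists b1, exists b2, e x b1 && e x b2 && (b1 != b2)]).
  by move=> /existsP[x /existsP[b1 /existsP[b2 /andP[/andP[H1 H2] H3]]]]; exists x, b1, b2.
rewrite negb_exists => /forallP Hall.
have Huniq : forall x b1 b2, e x b1 -> e x b2 -> b1 = b2.
  move=> x b1 b2 H1 H2; apply/eqP; apply: contraNT (Hall x) => H3.
  by apply/existsP; exists b1; apply/existsP; exists b2; rewrite H1 H2.
have Hin : forall z, (z == u) || (z == v).
  move=> z; have /connectP [p Hp ->] := conn u z.
  elim: p u v Huv Hp {Hall} => [|y p IH] u' v' Huv' /=; first by rewrite eqxx.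
  move=> /andP[Huy Hp].
  have Hyv : y = v' by apply: (Huniq u').
  subst y.
  have Hvu : e v' u' by rewrite esym.
  by rewrite orbC; apply: IH Hvu Hp.
exfalso; apply: nK2; split.
  have Huv0 : u != v by apply: contraTneq Huv => ->; rewrite eirr.
  have H1 : #|[set u; v]| <= #|T| := max_card _.
  have H2 : #|T| <= #|[set u; v]|.
    by apply/subset_leq_card/subsetP => z _; rewrite !inE Hin.
  move: H1 H2; rewrite cards2 Huv0 /=; lia.
move=> x y Hxy.
have := Hin x; have := Hin y.
case/orP => /eqP Hy; case/orP => /eqP Hx; subst x y; rewrite ?eqxx // in Hxy.
by rewrite esym.
Qed.

End Misc.


Section Fin.
Variable T : finType.
Variable e : rel T.
Hypothesis esym : symmetric e.
Variable x0 : T.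

Lemma fin0 s1 : path e x0 s1 -> last x0 s1 = x0 -> (forall v, v \in x0 :: s1) ->
  exists y0 w, [/\ path e y0 w, size w = size s1 + 0 &
    forall v, deg_plus e y0 w v = deg e v + 2 * count_mem v s1 + 0].
Proof.
move=> Hp Hl _; exists x0, s1; split => //; first by rewrite addn0.
by move=> v; rewrite dp_closed // addn0.
Qed.

Lemma fin1 z b s1 : e z b -> path e x0 s1 -> last x0 s1 = x0 -> (forall v, v \in x0 :: s1) ->
  exists y0 w, [/\ path e y0 w, size w = size s1 + 1 &
    forall v, deg_plus e y0 w v = deg e v + 2 * count_mem v s1 + ((z == v) + (b == v))].
Proof.
move=> Hzb Hp Hl Hsp.
have [s2 [Hp2 Hl2 Hsz2 Hc2]] := rotate_walk Hp Hl (Hsp z).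
exists z, (rcons s2 b); split.
- by rewrite rcons_path Hp2 Hl2 Hzb.
- by rewrite size_rcons Hsz2 addn1.
- move=> v; have := dp_eq e z (rcons s2 b) v.
  rewrite last_rcons -cats1 count_cat Hc2 /= (eq_sym b); genb; lia.
Qed.

Lemma fin2 x b1 b2 s1 : e x b1 -> e x b2 -> path e x0 s1 -> last x0 s1 = x0 ->
  (forall v, v \in x0 :: s1) ->
  exists y0 w, [/\ path e y0 w, size w = size s1 + 2 &
    forall v, deg_plus e y0 w v = deg e v + 2 * count_mem v s1 +
                 ((b1 == v) + 2 * (x == v) + (b2 == v))].
Proof.
move=> H1 H2 Hp Hl Hsp.
have [s2 [Hp2 Hl2 Hsz2 Hc2]] := rotate_walk Hp Hl (Hsp x).
exists b1, (x :: rcons s2 b2); split.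
- by rewrite /= esym H1 rcons_path Hp2 Hl2 H2.
- by rewrite /= size_rcons Hsz2 addn2.
- move=> v; have := dp_eq e b1 (x :: rcons s2 b2) v.
  have Ec : count_mem v (x :: rcons s2 b2) = (x == v) + count_mem v s2 + (b2 == v).
    by rewrite /= -cats1 count_cat /= eq_sym (eq_sym b2) addn0 addnA.
  rewrite Ec Hc2 /= last_rcons; genb; lia.
Qed.

End Fin.

Lemma half1 (D z b : nat) : z + b <= 1 -> (D + (z + b)) %/ 2 = D %/ 2 + odd D * (z + b).
Proof. move=> H; have : z + b = 0 \/ z + b = 1 by lia. case=> ->; lia. Qed.

Lemma pt1 (D : nat) (x y : bool) : ~~ (x && y) ->
  (D + (x + y)) %/ 2 = D %/ 2 + odd D * x + odd D * y.
Proof. case: x; case: y => //= _; lia. Qed.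

Lemma pt2 (D : nat) (x1 x2 x3 : bool) : ~~ (x1 && x2) -> ~~ (x1 && x3) -> ~~ (x2 && x3) ->
  (D + (x1 + 2 * x3 + x2)) %/ 2 = D %/ 2 + odd D * x1 + odd D * x2 + 1 * x3.
Proof. case: x1; case: x2; case: x3 => //= _ _ _; lia. Qed.

Lemma par1 (E s1 s2 : int) (o1 o2 : bool) :
  (s1 = 1 \/ s1 = -1)%R -> (s2 = 1 \/ s2 = -1)%R -> o1 != o2 -> ~~ (2 %| E)%Z ->
  (2 %| (E + s1 * Posz o1 + s2 * Posz o2)%R)%Z.
Proof.
case=> ->; case=> ->; case: o1; case: o2 => //= _ H; lia.
Qed.

Lemma par2 (E s1 s2 s3 : int) (o : bool) :
  (s1 = 1 \/ s1 = -1)%R -> (s2 = 1 \/ s2 = -1)%R -> (s3 = 1 \/ s3 = -1)%R -> ~~ (2 %| E)%Z ->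
  (2 %| (E + s1 * Posz o + s2 * Posz o + s3 * Posz 1)%R)%Z.
Proof.
case=> ->; case=> ->; case=> ->; case: o => /= H; lia.
Qed.

Lemma nand_eq (T : finType) (z b v : T) : z != b -> ~~ ((z == v) && (b == v)).
Proof. move=> H; apply/andP => [[/eqP E1 /eqP E2]]; by rewrite E1 E2 eqxx in H. Qed.

Theorem theorem4p5 (T : finType) (e : rel T) (k : nat) (x0 : T) (s : seq T) :
  simple_graph e -> nice e ->
  is_chromatic_number e k ->
  is_walk e x0 s -> walk_closed x0 s -> walk_spanning x0 s ->
  exists (y0 : T) (w : seq T),
    irregularising e y0 w /\
    size w <= size s + (#|T| - 1) * (2 * k - 2) + 2 * max_degree e.
Proof.
move=> [esym eirr] [conn nK2] [[c Hc] Hmin] Hw /eqP Hcl Hsp.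
case: (boolP [exists u, exists v, e u v]) => [Hex|Hno]; last first.
  exists x0, [::]; split => //; split => // u v Huv; exfalso.
  move: Hno; apply/negP/negPn/existsP; exists u; apply/existsP; by exists v.
move: Hex => /existsP[u0 /existsP[v0 Huv0]].
have k2 : 1 < k.
  case: (ltnP 1 k) => // Hk; exfalso; have := Hc _ _ Huv0.
  have Hu := ltn_ord (c u0); have Hv := ltn_ord (c v0).
  have Hcc : (c u0 : nat) = c v0 by lia.
  by rewrite -val_eqE /= Hcc eqxx.
set D := max_degree e.
have kD : k <= D.+1 := Hmin _ (greedy_col esym eirr).
have D1 : 1 <= D.
  apply: leq_trans (deg_le_max e u0); rewrite /deg card_gt0; apply/set0Pn.
  by exists v0; rewrite inE.
pose dep := dep conn x0.
pose par := par conn x0.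
have Hpar : forall u, u != x0 -> e u (par u) /\ dep u = (dep (par u)).+1.
  by move=> u Hu; apply: parP.
have Hr : dep x0 = 0 := dep_r conn x0.
pose DW v := deg e v + 2 * count_mem v s.
pose EW := (\sum_v sg dep v * (Posz (DW v %/ 2) - Posz (c v)))%R.
have [a' [b' [Hab Hsab]]] : exists a' b', (2 < k -> e a' b') /\ sg dep a' = sg dep b'.
  case: (ltnP 2 k) => Hk; last by exists x0, x0.
  case: (boolP [exists a, exists b, e a b && (odd (dep a) == odd (dep b))]).
    move=> /existsP[a /existsP[b /andP[Hab /eqP Hd]]]; exists a, b; split => //.
    exact: sg_eq.
  move=> Hno; exfalso.
  have : k <= 2.
    apply: Hmin; exists (fun v => inord (odd (dep v))) => a b Hab.
    rewrite -val_eqE /= !inordK; try by case: (odd _).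
    apply/negP => /eqP Hd; move: Hno; apply/negP/negPn/existsP; exists a.
    apply/existsP; exists b; rewrite Hab /=; apply/eqP.
    by move: Hd; case: (odd _); case: (odd _).
  lia.
have Hs := sg_pm dep a'.
have Main : forall (P : T -> nat) (l : nat) (E : int),
   (forall s1, path e x0 s1 -> last x0 s1 = x0 -> (forall v, v \in x0 :: s1) ->
     exists y0 w, [/\ path e y0 w, size w = size s1 + l &
       forall v, deg_plus e y0 w v = deg e v + 2 * count_mem v s1 + P v]) ->
   (\sum_v sg dep v * (Posz ((DW v + P v) %/ 2) - Posz (c v)) = E)%R ->
   (odd k \/ (2 %| E)%Z) -> (odd k -> l = 0) -> l <= 2 ->
   exists (y0 : T) (w : seq T), irregularising e y0 w /\
    size w <= size s + (#|T| - 1) * (2 * k - 2) + 2 * D.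
  move=> P l E Hfin HE Hpar2 Hl0 Hl2.
  have [we [Hcost Hwe Hdv]] : exists we, [/\ 2 * we + l <= 2 * D, 0 < we -> 2 < k &
      (Posz k %| (E + Posz we * (sg dep a' + sg dep a'))%R)%Z].
    case: (boolP (odd k)) => Hk.
      have [w [Hw1 Hw2]] := odd_solve E Hk Hs.
      exists w; split => //; first by rewrite Hl0 //; lia.
      move=> _; lia.
    case: Hpar2 => [Hk'|H2]; first by rewrite Hk' in Hk.
    have [w [Hw1 Hw2]] := even_solve Hk (ltnW k2) Hs H2.
    have Hkk : k = (k./2).*2 by rewrite -{1}(odd_double_half k) (negbTE Hk).
    exists w; split => //; lia.
  have Hwe' : 0 < we -> e a' b' by move=> /Hwe /Hab.
  have Hgood : (Posz k %| (\sum_v sg dep v * (Posz ((deg e v + 2 * count_mem v s + P v) %/ 2 +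
              we * ((a' == v) + (b' == v))) - Posz (c v)))%R)%Z.
    suff -> : (\sum_v sg dep v * (Posz ((deg e v + 2 * count_mem v s + P v) %/ 2 +
              we * ((a' == v) + (b' == v))) - Posz (c v)) =
           E + Posz we * (sg dep a' + sg dep a'))%R by [].
    rewrite sum_shift -HE; congr (_ + _)%R.
    under eq_bigr => v _ do rewrite mulnDr PoszD mulrDr.
    rewrite big_split /=.
    rewrite (sum_ind_nat dep (fun _ => we) a') (sum_ind_nat dep (fun _ => we) b').
    rewrite Hsab; ring.
  have [y0 [w [Hirr Hsz]]] := core esym Hc Hw Hcl Hsp Hpar Hr Hwe' Hfin Hgood.
  exists y0, w; split => //.
  apply: leq_trans Hsz _; lia.
have HW0 : (\sum_v sg dep v * (Posz ((DW v + 0) %/ 2) - Posz (c v)) = EW)%R.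
  by apply: eq_bigr => v _; rewrite addn0.
have Hfin0 := @fin0 T e x0.
have HoddDW : forall v, odd (DW v) = odd (deg e v).
  by move=> v; rewrite /DW oddD oddM /= addbF.
case: (boolP (odd k)) => Hk.
  by apply: (Main (fun _ => 0) 0 EW) => //; left.
case: (boolP (2 %| EW)%Z) => H2.
  by apply: (Main (fun _ => 0) 0 EW) => //; right.
case: (boolP [exists z, exists b, e z b && (odd (deg e z) != odd (deg e b))]).
  move=> /existsP[z /existsP[b /andP[Hzb Hodd]]].
  have Hzb' : z != b by apply: contraTneq Hzb => ->; rewrite eirr.
  apply: (Main (fun v => (z == v) + (b == v)) 1
     (EW + sg dep z * Posz (odd (DW z)) + sg dep b * Posz (odd (DW b)))%R) => //.
  - by move=> s1 Hp Hl Hs1; exact: (fin1 Hzb Hp Hl Hs1).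
  - have Hpt := fun v => pt1 (DW v) (nand_eq v Hzb').
    under eq_bigr => v _ do rewrite Hpt.
    by rewrite !sum_shift !sum_ind_nat.
  - right; apply: par1; [exact: sg_pm | exact: sg_pm | by rewrite !HoddDW | exact: H2].
  - by rewrite (negbTE Hk).
rewrite negb_exists => /forallP Hno.
have Hsame : forall a b, e a b -> odd (deg e a) = odd (deg e b).
  move=> a1 a2 Ha; have := Hno a1; rewrite negb_exists => /forallP /(_ a2).
  by rewrite Ha /= negbK => /eqP.
have [x [b1 [b2 [H1 H2' H12]]]] := two_nbrs esym eirr conn nK2 Huv0.
have Hx1 : x != b1 by apply: contraTneq H1 => ->; rewrite eirr.
have Hx2 : x != b2 by apply: contraTneq H2' => ->; rewrite eirr.
apply: (Main (fun v => (b1 == v) + 2 * (x == v) + (b2 == v)) 2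
   (EW + sg dep b1 * Posz (odd (DW b1)) + sg dep b2 * Posz (odd (DW b2))
       + sg dep x * Posz 1)%R) => //.
- by move=> s1 Hp Hl Hs1; exact: (fin2 esym H1 H2' Hp Hl Hs1).
- have Hx1' : b1 != x by rewrite eq_sym.
  have Hx2' : b2 != x by rewrite eq_sym.
  have Hpt := fun v => pt2 (DW v) (nand_eq v H12) (nand_eq v Hx1') (nand_eq v Hx2').
  under eq_bigr => v _ do rewrite Hpt.
  by rewrite !sum_shift !sum_ind_nat.
- right; have Ho : odd (DW b2) = odd (DW b1).
    by rewrite !HoddDW -(Hsame _ _ H1) -(Hsame _ _ H2').
  rewrite Ho; apply: par2; [exact: sg_pm | exact: sg_pm | exact: sg_pm | exact: H2].
- by rewrite (negbTE Hk).
Qed.
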